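(* Let $V=(\mathbb F_2)^n$ and let $T'$ be a subgroup of the translation group $T(V)$ of order $2^{n-1}$, and set $U=\{v\in V:\sigma_v\in T'\}$. Let $\mathcal A,\mathcal B$ be partitions of $V$. Then $T'$ maps $\mathcal A$ onto $\mathcal B$ (i.e. every non-identity $\rho\in T'$ maps $\mathcal A$ onto $\mathcal B$) if and only if $\mathcal A=\mathcal B$ and either $\mathcal A=\mathcal L(W)$ for some subspace $W$ of $V$, or $\mathcal A=\mathcal{LA}_U(W_1|W_2)$ for some subspaces $W_1,W_2$ of $U$.
   Context: $\sigma_v$ denotes the translation $x\mapsto x+v$ and $T(V)=\{\sigma_v:v\in V\}$. A permutation $\rho$ maps a partition $\mathcal A$ onto $\mathcal B$ if $\{A\rho:A\in\mathcal A\}=\mathcal B$. For a subspace $W$, $\mathcal L(W)=\{W+v:v\in V\}$ (linear partition). For a subspace $U$ of dimension $n-1$ and subspaces $W_1,W_2\subseteq U$, the linear-affine partition is $\mathcal{LA}_U(W_1|W_2)=\{W_1+v:v\in U\}\cup\{(W_2+\bar v)+v:v\in U\}$, where $\bar v$ is any element of $V\setminus U$ (the partition does not depend on this choice); if $W_1=W_2$ it equals $\mathcal L(W_1)$. *)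

(* Defs.v *)
From HB Require Import structures.
From mathcomp Require Import all_boot all_order all_algebra all_fingroup.
Set Implicit Arguments. Unset Strict Implicit. Unset Printing Implicit Defensive.
Import GRing.Theory.
Local Open Scope ring_scope.

Notation Vn n := 'rV['F_2]_n.

Section Defs.
Variable n : nat.

Definition transl (v : Vn n) : {perm Vn n} := perm (addIr v).

Definition Tgrp : {set {perm Vn n}} := [set transl v | v in [set: Vn n]].

Definition maps_onto (rho : {perm Vn n}) (A B : {set {set Vn n}}) : bool :=
  [set rho @: X | X : {set Vn n} in A] == B.

Definition coset (W : {vspace Vn n}) (v : Vn n) : {set Vn n} :=
  [set x | x - v \in W].

Definition linpart (W : {vspace Vn n}) : {set {set Vn n}} :=
  [set coset W v | v in [set: Vn n]].

Definition linaffpart (U : {set Vn n}) (W1 W2 : {vspace Vn n}) : {set {set Vn n}} :=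
  let vb := odflt 0 [pick x in ~: U] in
  [set coset W1 v | v in U] :|: [set coset W2 (vb + v) | v in U].

End Defs.

(* Main.v *)
Require Import Defs.
From HB Require Import structures.
From mathcomp Require Import all_boot all_order all_algebra all_fingroup.
Set Implicit Arguments. Unset Strict Implicit. Unset Printing Implicit Defensive.
Import GRing.Theory.

Ltac c2 := apply/rowP => i; rewrite !mxE;
  repeat match goal with |- context[@fun_of_matrix _ _ _ ?x ?k ?j] =>
    let a := fresh in move: (x k j) => a; case: a => [[|[|?]] ?] // end;
  try by apply/val_inj.

Section H.
Variable n : nat.
Local Notation V := 'rV['F_2]_n.
Local Open Scope ring_scope.

Lemma addxx (x : V) : x + x = 0.
Proof. apply/rowP => i; rewrite !mxE. case: (x 0 i) => [[|[|m]] Hm] //; by apply/val_inj. Qed.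

Lemma addKx (x y : V) : x + (x + y) = y.
Proof. by rewrite addrA addxx add0r. Qed.
Lemma addxK (x y : V) : x + y + y = x.
Proof. by rewrite -addrA addxx addr0. Qed.
Lemma oppE (y : V) : - y = y.
Proof. by apply/esym/eqP; rewrite -addr_eq0 addxx. Qed.
Lemma subE (x y : V) : x - y = x + y.
Proof. by rewrite oppE. Qed.

Lemma translE (v x : V) : transl v x = x + v.
Proof. by rewrite /transl permE. Qed.

Lemma transl_inj : injective (@transl n).
Proof. by move=> u v /(congr1 (fun p : {perm V} => p 0)); rewrite !translE !add0r. Qed.

Lemma translD (u v : V) : (transl u * transl v)%g = transl (u + v).
Proof. by apply/permP => x; rewrite permM !translE addrA. Qed.

Lemma transl0 : transl 0 = 1%g :> {perm V}.
Proof. by apply/permP => x; rewrite translE perm1 addr0. Qed.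

Definition img (u : V) (A : {set {set V}}) := [set transl u @: X | X : {set V} in A].

Lemma trX0 (X : {set V}) : transl 0 @: X = X.
Proof.
apply/setP => y; apply/imsetP/idP => [[x Hx ->]|Hy]; first by rewrite translE addr0.
by exists y => //; rewrite translE addr0.
Qed.

Lemma trK (u : V) (X : {set V}) : transl u @: (transl u @: X) = X.
Proof.
rewrite -imset_comp -[RHS]trX0; apply: eq_imset => x /=.
by rewrite !translE addxK addr0.
Qed.

Lemma imgK (u : V) (A : {set {set V}}) : img u (img u A) = A.
Proof.
rewrite /img -imset_comp -[RHS]imset_id; apply: eq_imset => X /=; exact: trK.
Qed.

Lemma imgD (u v : V) (A : {set {set V}}) : img (u + v) A = img v (img u A).
Proof.
rewrite /img -imset_comp; apply: eq_imset => X /=.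
rewrite -imset_comp; apply: eq_imset => x /=; by rewrite !translE addrA.
Qed.

Lemma img0 (A : {set {set V}}) : img 0 A = A.
Proof.
rewrite /img -[RHS]imset_id; apply: eq_imset => X /=; exact: trX0.
Qed.

Lemma img_inv (u : V) (A : {set {set V}}) : (forall X, X \in A -> transl u @: X \in A) -> img u A = A.
Proof.
move=> H; apply/setP => X; apply/imsetP/idP => [[Y HY ->]|HX]; first exact: H.
by exists (transl u @: X); [exact: H | rewrite trK].
Qed.

Lemma tr_coset (W : {vspace V}) (v u : V) : transl u @: Defs.coset W v = Defs.coset W (v + u).
Proof.
rewrite /Defs.coset; apply/setP => y; apply/imsetP/idP => [[x Hx ->]|Hy].
  by move: Hx; rewrite !inE translE opprD addrACA subrr addr0.
exists (y - u); last by rewrite translE subrK.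
by move: Hy; rewrite !inE opprD addrA addrAC.
Qed.

Lemma mkvs (S : {set V}) : 0 \in S -> (forall a b, a \in S -> b \in S -> a + b \in S) ->
  exists W : {vspace V}, forall x, (x \in W) = (x \in S).
Proof.
move=> S0 SD; exists <<enum S>>%VS => x; apply/idP/idP; last first.
  by move=> Hx; apply: memv_span; rewrite mem_enum.
have: all (mem S) (enum S) by apply/allP => y; rewrite mem_enum.
elim: (enum S) x => [|a s IH] x; first by rewrite span_nil memv0 => _ /eqP ->.
move=> /= /andP [Ha Hs]; rewrite span_cons => /memv_addP [y /vlineP [k ->] [z Hz ->]].
apply: SD; last exact: IH.
case: k => [[|[|m]] Hm] //.
  have -> : (Ordinal Hm : 'F_2) = 0 by apply/val_inj.
  by rewrite scale0r.
have -> : (Ordinal Hm : 'F_2) = 1 by apply/val_inj.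
by rewrite scale1r.
Qed.

End H.

Section P.
Variable n : nat.
Local Notation V := 'rV['F_2]_n.
Local Open Scope ring_scope.
Variables (U : {set V}) (U0 : 0 \in U)
  (UD : forall u v, u \in U -> v \in U -> u + v \in U)
  (Uidx : forall x y, x \notin U -> y \notin U -> x + y \in U)
  (vb : V) (vbU : vb \notin U)
  (A : {set {set V}}) (hA : partition A [set: V])
  (inv : forall u, u \in U -> img u A = A).

Let hcov : cover A = [set: V]. Proof. by case/and3P: hA => /eqP. Qed.
Let htriv : trivIset A. Proof. by case/and3P: hA. Qed.
Let h0 : set0 \notin A. Proof. by case/and3P: hA. Qed.

Local Notation f := (pblock A).

Let memf x : x \in f x. Proof. by rewrite mem_pblock hcov inE. Qed.
Let fA x : f x \in A. Proof. by apply: pblock_mem; rewrite hcov inE. Qed.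
Let fE x y : (y \in f x) = (f x == f y). Proof. by rewrite eq_pblock // hcov inE. Qed.

Let Apart : A = [set f x | x in [set: V]].
Proof.
apply/setP => X; apply/idP/imsetP => [HX | [x _ ->]]; last exact: fA.
have /set0Pn [x Hx] : X != set0 by apply: contraNneq h0 => <-.
by exists x; rewrite ?inE // (def_pblock htriv HX Hx).
Qed.

Let fT u x : u \in U -> f (x + u) = transl u @: f x.
Proof.
move=> Hu; have HY : transl u @: f x \in A.
  by have := inv Hu; rewrite /img => {2}<-; apply: imset_f; exact: fA.
apply: def_pblock => //; apply/imsetP; exists x => //; by rewrite translE.
Qed.

Let fTeq u x y : u \in U -> f x = f y -> f (x + u) = f (y + u).
Proof. by move=> Hu; rewrite !fT // => ->. Qed.

Let shift t p q : t \in U -> (f p = f q) <-> (f (p + t) = f (q + t)).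
Proof.
move=> Ht; split; first exact: fTeq.
by move/(fTeq Ht); rewrite !addxK.
Qed.

Let stab x u z : u \in U -> f x = f (x + u) -> f z = f x -> f (z + u) = f x.
Proof. by move=> Hu Hx Hz; rewrite (fTeq Hu Hz) -Hx. Qed.

Let Uadd x y : x \in U -> (x + y \in U) = (y \in U).
Proof.
move=> Hx; apply/idP/idP => [H|]; last exact: UD.
by rewrite -(addKx x y); apply: UD.
Qed.

Section Straddle.
Variables (p0 w0 : V) (w0U : w0 \notin U) (Hp : f p0 = f (p0 + w0)).

Let L z : f z = f p0 -> f (z + w0) = f p0.
Proof.
move=> Hz; case: (boolP (z + p0 \in U)) => Hzp.
  have e : p0 + w0 + (z + p0) = z + w0 by c2.
  rewrite -e; apply: (stab (x := p0)) => //; try by rewrite -Hp.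
  have -> : p0 + (z + p0) = z by c2.
  by rewrite Hz.
have Hu : z + p0 + w0 \in U by apply: Uidx.
have e : p0 + (z + p0 + w0) = z + w0 by c2.
rewrite -e Hp; apply: (stab (x := p0 + w0)) => //.
have -> : p0 + w0 + (z + p0 + w0) = z by c2.
by rewrite Hz Hp.
Qed.

Lemma invw0 x y : f x = f y -> f (x + w0) = f (y + w0).
Proof.
move=> Hxy; case: (boolP (x + p0 \in U)) => Ht.
  have H1 : f (y + (x + p0)) = f p0.
    by rewrite -(fTeq Ht Hxy); congr f; c2.
  have H2 := L H1.
  rewrite Hp in H2.
  have := fTeq Ht H2.
  have -> : y + (x + p0) + w0 + (x + p0) = y + w0 by c2.
  have -> : p0 + w0 + (x + p0) = x + w0 by c2.
  by move->.
have Hu : x + p0 + w0 \in U by apply: Uidx.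
have H1 : f (y + (x + p0 + w0)) = f p0.
  by rewrite -(fTeq Hu Hxy) Hp; congr f; c2.
have H2 := L H1.
have := fTeq Hu H2.
have -> : y + (x + p0 + w0) + w0 + (x + p0 + w0) = y + w0 by c2.
have -> : p0 + (x + p0 + w0) = x + w0 by c2.
by move->.
Qed.
End Straddle.

Lemma classify : (exists W : {vspace V}, A = linpart W) \/
  (exists W1 W2 : {vspace V}, (forall x, x \in W1 -> x \in U) /\
     (forall x, x \in W2 -> x \in U) /\
     A = [set Defs.coset W1 v | v in U] :|: [set Defs.coset W2 (vb + v) | v in U]).
Proof.
case: (boolP [exists p, exists w, (w \notin U) && (f p == f (p + w))]).
  case/existsP => p0 /existsP [w0 /andP [w0U /eqP Hp]].
  have allinv v x y : f x = f y -> f (x + v) = f (y + v).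
    case: (boolP (v \in U)) => Hv; first exact: fTeq.
    have Hu : v + w0 \in U by apply: Uidx.
    move=> /(invw0 w0U Hp) /(fTeq Hu).
    have -> : x + w0 + (v + w0) = x + v by c2.
    by have -> : y + w0 + (v + w0) = y + v by c2.
  have [W HW] : exists W : {vspace V}, forall x, (x \in W) = (x \in [set w | f 0 == f w]).
    apply: mkvs; first by rewrite inE.
    move=> a b; rewrite !inE => /eqP Ha /eqP Hb; apply/eqP.
    have := allinv a _ _ Hb; rewrite add0r -Ha => ->; by rewrite addrC.
  left; exists W; rewrite Apart /linpart; apply: eq_imset => x.
  apply/setP => y; rewrite /Defs.coset inE HW inE subE fE.
  apply/eqP/eqP => [/(allinv x)|/(allinv x)]; first by rewrite addxx.
  by rewrite add0r addxK => ->.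
move/existsPn => H.
have NS p w : f p = f (p + w) -> w \in U.
  move=> e; move: (H p) => /existsPn /(_ w); by rewrite e eqxx andbT negbK.
have [W1 HW1] : exists W : {vspace V}, forall x, (x \in W) = (x \in [set w | f 0 == f w]).
  apply: mkvs; first by rewrite inE.
  move=> a b; rewrite !inE => /eqP Ha /eqP Hb; apply/eqP.
  have aU : a \in U by apply: (NS 0); rewrite add0r.
  have := fTeq aU Hb; rewrite add0r -Ha => ->; by rewrite addrC.
have [W2 HW2] : exists W : {vspace V}, forall x, (x \in W) = (x \in [set w | f vb == f (vb + w)]).
  apply: mkvs; first by rewrite inE addr0.
  move=> a b; rewrite !inE => /eqP Ha /eqP Hb; apply/eqP.
  have aU : a \in U by apply: (NS vb).
  have := fTeq aU Hb; rewrite -Ha => ->; congr f; c2.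
have c1 x : x \in U -> f x = Defs.coset W1 x.
  move=> Hx; apply/setP => y; rewrite /Defs.coset inE HW1 inE subE fE.
  apply/eqP/eqP => [/(fTeq Hx)|/(fTeq Hx)]; first by rewrite addxx.
  by rewrite add0r addxK => ->.
have c3 x : x \notin U -> f x = Defs.coset W2 x.
  move=> Hx; have Ht : x + vb \in U by apply: Uidx.
  apply/setP => y; rewrite /Defs.coset inE HW2 inE subE fE.
  apply/eqP/eqP => [/(fTeq Ht)|/(fTeq Ht)].
    have -> : x + (x + vb) = vb by c2.
    by have -> : y + (x + vb) = vb + (y + x) by c2.
  have -> : vb + (x + vb) = x by c2.
  by have -> : vb + (y + x) + (x + vb) = y by c2.
right; exists W1, W2; split; first by move=> x; rewrite HW1 inE => /eqP e; apply: (NS 0); rewrite add0r.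
split; first by move=> x; rewrite HW2 inE => /eqP; apply: NS.
rewrite Apart; apply/setP => X; rewrite in_setU; apply/imsetP/orP.
  case=> x _ ->; case: (boolP (x \in U)) => Hx.
    by left; apply/imsetP; exists x => //; apply: c1.
  right; apply/imsetP; exists (vb + x); first exact: Uidx.
  by rewrite addKx; apply: c3.
case=> /imsetP [v Hv ->].
  by exists v; rewrite ?inE // c1.
exists (vb + v); rewrite ?inE // c3 //.
by rewrite addrC Uadd.
Qed.

End P.

Lemma pick_out n (S : {set 'rV['F_2]_n}) (a b : 'rV['F_2]_n) :
  2 < #|S| -> exists2 u, u \in S & (u != a) && (u != b).
Proof.
move=> HS; case: (pickP [pred u | (u \in S) && (u != a) && (u != b)]) => [u /andP[/andP[H1 H2] H3]|H0].
  by exists u => //; apply/andP.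
have sub : S \subset [set a; b].
  apply/subsetP => u Hu; move: (H0 u) => /=; rewrite Hu /= !inE.
  by case: (u == a); case: (u == b).
have := subset_leq_card sub; rewrite cards2.
by case: (a != b) => /= H; move: (leq_trans HS H).
Qed.

Theorem proposition3p6 (n : nat) (hn : 2 < n)
  (T' : {group {perm 'rV['F_2]_n}})
  (hT : T' \subset Tgrp n) (hcard : #|T'| = 2 ^ n.-1)
  (A B : {set {set 'rV['F_2]_n}})
  (hA : partition A [set: 'rV['F_2]_n]) (hB : partition B [set: 'rV['F_2]_n]) :
  let U := [set v | transl v \in T'] in
  (forall rho, rho \in T' -> rho != 1%g -> maps_onto rho A B) <->
  (A = B /\
   ((exists W : {vspace 'rV['F_2]_n}, A = linpart W) \/
    (exists W1 W2 : {vspace 'rV['F_2]_n},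
        (forall x, x \in W1 -> x \in U) /\ (forall x, x \in W2 -> x \in U) /\
        A = linaffpart U W1 W2))).
Proof.
move=> U.
have U0 : (0%R : 'rV['F_2]_n) \in U by rewrite inE transl0 group1.
have UD u v : u \in U -> v \in U -> (u + v)%R \in U.
  by rewrite !inE -translD; apply: groupM.
have TU : (T' : {set _}) = (@transl n) @: U.
  apply/setP => r; apply/idP/imsetP => [Hr|[v Hv ->]]; last by rewrite inE in Hv.
  have := subsetP hT r Hr; case/imsetP => v _ e; exists v => //.
  by rewrite inE -e.
have cardU : #|U| = 2 ^ n.-1 by rewrite -hcard TU card_imset //; exact: transl_inj.
have cardV : #|[set: 'rV['F_2]_n]| = 2 ^ n.
  by rewrite cardsT card_mx card_Fp // mul1n.
have cardC : #|~: U| = 2 ^ n.-1.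
  have := cardsC U; rewrite cardU -cardsT cardV.
  have -> : 2 ^ n = 2 ^ n.-1 + 2 ^ n.-1.
    by rewrite addnn -mul2n -expnS prednK // (ltn_trans _ hn).
  by move/eqP; rewrite eqn_add2l => /eqP.
have Uidx x y : x \notin U -> y \notin U -> (x + y)%R \in U.
  move=> Hx Hy.
  have sub : [set (x + u)%R | u in U] \subset ~: U.
    apply/subsetP => z /imsetP [u Hu ->]; rewrite inE; apply: contra Hx => H.
    by rewrite -(addxK x u); apply: UD.
  have e : [set (x + u)%R | u in U] = ~: U.
    apply/eqP; rewrite eqEcard sub /= card_imset ?cardU ?cardC //.
    exact: GRing.addrI.
  have : y \in ~: U by rewrite inE.
  rewrite -e => /imsetP [u Hu ->]; by rewrite addKx.
have vbU : odflt 0%R [pick x in ~: U] \notin U.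
  case: pickP => [x|H0]; first by rewrite inE.
  have : 0 < #|~: U| by rewrite cardC expn_gt0.
  rewrite card_gt0 => /set0Pn [x Hx]; by move: (H0 x); rewrite Hx.
split.
  move=> H.
  have HU u : u \in U -> u != 0%R -> img u A = B.
    move=> Hu Hu0; apply/eqP; apply: H; first by rewrite inE in Hu.
    apply: contra_neq Hu0 => e; apply: transl_inj; by rewrite e transl0.
  have big : 2 < #|U|.
    rewrite cardU; apply: (@leq_trans (2 ^ 2)) => //.
    by rewrite leq_exp2l // -ltnS prednK // (ltn_trans _ hn).
  have [u1 Hu1 /andP [Hu10 _]] := pick_out 0%R 0%R big.
  have [u2 Hu2 /andP [Hu20 Hu21]] := pick_out 0%R u1 big.
  have AB : A = B.
    have e1 : img u2 B = A by rewrite -(HU _ Hu2 Hu20) imgK.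
    rewrite -e1 -{1}(HU _ Hu1 Hu10) -imgD HU //; first exact: UD.
    apply: contra_neq Hu21 => e.
    by rewrite -(addKx u1 u2) e addr0.
  split => //.
  have inv u : u \in U -> img u A = A.
    move=> Hu; case: (eqVneq u 0%R) => [->|Hu0]; first exact: img0.
    by rewrite HU // AB.
  have := classify UD Uidx vbU hA inv.
  case=> [H1|[W1 [W2 [H1 [H2 H3]]]]]; first by left.
  by right; exists W1, W2; split => //; split => //; rewrite H3.
case=> AB Hcl r Hr _.
have := subsetP hT r Hr; case/imsetP => u _ e; subst r.
have Hu : u \in U by rewrite inE.
rewrite -AB; apply/eqP; apply: img_inv.
case: Hcl => [[W ->]|[W1 [W2 [H1 [H2 ->]]]]].
  move=> X /imsetP [v _ ->]; rewrite tr_coset; apply: imset_f; by rewrite inE.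
move=> X; rewrite /linaffpart /= !in_setU => /orP [/imsetP [v Hv ->]|/imsetP [v Hv ->]];
  rewrite tr_coset; [apply/orP; left | apply/orP; right; rewrite -addrA];
  apply: imset_f; exact: UD.
Qed.
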